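(* Let $A\in\mathbb{C}^{n\times n}$ and let $\bar{A}$ denote its entrywise complex conjugate. Then $A$ is G-Hamiltonian if and only if $A$ is similar to $-\bar{A}$, i.e. there exists an invertible $Q\in\mathbb{C}^{n\times n}$ with $Q^{-1}AQ=-\bar{A}$.
   Context: A matrix $A\in\mathbb{C}^{n\times n}$ is called G-Hamiltonian if there exist a non-singular Hermitian matrix $G\in\mathbb{C}^{n\times n}$ and a Hermitian matrix $S\in\mathbb{C}^{n\times n}$ such that $A=iG^{-1}S$. *)

(* Defs.v *)
From mathcomp Require Import all_boot all_algebra.
From mathcomp Require Import complex reals.
Set Implicit Arguments. Unset Strict Implicit. Unset Printing Implicit Defensive.
Import GRing.Theory Num.Theory.
Local Open Scope ring_scope.

(* Complex numbers are modelled as R[i] = complex R for R : realType (i.e. C). *)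

Definition entry_conj {R : realType} {m n : nat} (A : 'M[R[i]]_(m, n)) : 'M[R[i]]_(m, n) :=
  map_mx (fun z => z^*) A.

Definition adjmx {R : realType} {m n : nat} (A : 'M[R[i]]_(m, n)) : 'M[R[i]]_(n, m) :=
  (entry_conj A)^T.

Definition hermitian {R : realType} {n : nat} (H : 'M[R[i]]_n) : Prop :=
  adjmx H = H.

Definition G_Hamiltonian {R : realType} {n : nat} (A : 'M[R[i]]_n) : Prop :=
  exists G S : 'M[R[i]]_n,
    [/\ G \in unitmx, hermitian G, hermitian S & A = 'i *: (invmx G *m S)].

(* Main.v *)
Require Import Defs.
From mathcomp Require Import all_boot all_algebra.
From mathcomp Require Import complex reals.
From mathcomp Require Import zify fingroup perm.
Set Implicit Arguments. Unset Strict Implicit. Unset Printing Implicit Defensive.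
Import GRing.Theory Num.Theory.
Local Open Scope ring_scope.

Section TS.
Variable F : fieldType.

Definition Tsim n (A : 'M[F]_n) := exists2 P : 'M[F]_n, P \in unitmx & A *m P = P *m A^T.

Lemma tsim_conj n (A D S : 'M[F]_n) : S \in unitmx -> S *m A = D *m S -> Tsim D -> Tsim A.
Proof.
move=> Su eSA [P Pu eP].
have eA : A = invmx S *m D *m S by rewrite -mulmxA -eSA mulmxA mulVmx // mul1mx.
exists (invmx S *m P *m (invmx S)^T).
  by rewrite !unitmx_mul unitmx_tr !unitmx_inv Su Pu.
rewrite eA !trmx_mul !mulmxA trmx_inv.
rewrite -!mulmxA; congr (_ *m _); rewrite !mulmxA mulmxKV //.
rewrite -!mulmxA mulKVmx ?unitmx_tr //.
by rewrite !mulmxA eP.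
by rewrite unitmx_tr.
Qed.

Lemma tsim_block r s (A1 : 'M[F]_r) (A2 : 'M[F]_s) :
  Tsim A1 -> Tsim A2 -> Tsim (block_mx A1 0 0 A2).
Proof.
move=> [P1 P1u e1] [P2 P2u e2]; exists (block_mx P1 0 0 P2).
  by rewrite unitmxE det_ublock unitrM -!unitmxE P1u P2u.
by rewrite tr_block_mx !trmx0 !mulmx_block !mulmx0 !mul0mx !addr0 !add0r e1 e2.
Qed.

Lemma tsim_shift n (A : 'M[F]_n) a : Tsim (A - a%:M) -> Tsim A.
Proof.
move=> [P Pu eP]; exists P => //.
have -> : A = (A - a%:M) + a%:M by rewrite subrK.
by rewrite linearD /= tr_scalar_mx mulmxDl mulmxDr eP scalar_mxC.
Qed.

Lemma tsim_split n r s (A : 'M[F]_n) (U : 'M[F]_(r,n)) (U' : 'M[F]_(s,n)) A1 A2 :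
  (r + s = n)%N -> (U :&: U')%MS = 0 -> row_free U -> row_free U' ->
  U *m A = A1 *m U -> U' *m A = A2 *m U' -> Tsim A1 -> Tsim A2 -> Tsim A.
Proof.
move=> e; subst n => cap0 fU fU' eU eU' T1 T2.
apply: (@tsim_conj _ _ (block_mx A1 0 0 A2) (col_mx U U')); last exact: tsim_block.
  rewrite -row_free_unit /row_free -addsmxE.
  have := mxrank_sum_cap U U'; rewrite cap0 mxrank0 addn0 => ->.
  by rewrite (eqP fU) (eqP fU').
by rewrite mul_col_mx mul_block_col !mul0mx addr0 add0r eU eU'.
Qed.

End TS.
Section TS2.
Variable F : fieldType.

Definition shiftmx d : 'M[F]_d := \matrix_(i, j) ((i.+1 == j)%N)%:R.
Definition krylov n d (v : 'rV[F]_n) (N : 'M[F]_n) : 'M[F]_(d, n) :=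
  \matrix_(a < d) (v *m N ^+ a).

Lemma krylovM n d (v : 'rV[F]_n) (N : 'M[F]_n) : N ^+ d = 0 ->
  krylov d v N *m N = shiftmx d *m krylov d v N.
Proof.
move=> Nd; apply/row_matrixP => a.
rewrite row_mul rowK -mulmxA mulmxE -exprSr row_mul.
apply/rowP => j; rewrite [RHS]mxE.
have [h|h] := ltnP a.+1 d.
  rewrite [RHS](bigD1 (Ordinal h)) //= !mxE /= eqxx mul1r [X in _ + X]big1 ?addr0 //.
  move=> k nk; rewrite !mxE; case: eqP; last by rewrite mul0r.
  by move=> e; case/eqP: nk; apply/val_inj.
have ea : a.+1 = d by apply/eqP; rewrite eqn_leq h ltn_ord.
rewrite [RHS]big1; first by rewrite ea Nd mulmx0 mxE.
move=> k _; rewrite !mxE; case: eqP; last by rewrite mul0r.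
by move=> e; have := ltn_ord k; rewrite -e ea ltnn.
Qed.

Lemma trmxX n (N : 'M[F]_n) k : (N ^+ k)^T = N^T ^+ k.
Proof.
elim: k => [|k IH]; first by rewrite !expr0 trmx1.
by rewrite exprS -mulmxE trmx_mul IH exprSr mulmxE.
Qed.
End TS2.
Arguments shiftmx {F} d.

Section TS3.
Variable F : fieldType.

Lemma hankel_entry n d (v : 'rV[F]_n) (c : 'cV[F]_n) (N : 'M[F]_n) (a b : 'I_d) :
  (krylov d v N *m (krylov d c^T N^T)^T) a b = (v *m N ^+ (a + b) *m c) 0 0.
Proof.
rewrite [LHS]mxE exprD -mulmxE !mulmxA -[v *m _ *m _ *m c]mulmxA [RHS]mxE.
apply: eq_bigr => k _; rewrite !mxE.
congr (_ * _).
by rewrite -trmxX; apply: eq_bigr => i _; rewrite !mxE mulrC.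
Qed.

Lemma hankel_unit n d (v : 'rV[F]_n) (c : 'cV[F]_n) (N : 'M[F]_n) :
  N ^+ d = 0 -> (v *m N ^+ d.-1 *m c) 0 0 = 1 ->
  krylov d v N *m (krylov d c^T N^T)^T \in unitmx.
Proof.
move=> Nd e1; set H := _ *m _.
pose s := perm (@rev_ord_inj d).
have : row_perm s H \in unitmx.
  rewrite unitmxE (@det_trig _ _ (row_perm s H)).
    rewrite big1 ?unitr1 // => i _; rewrite mxE permE hankel_entry /=.
    have -> : (d - i.+1 + i = d.-1)%N.
      by have := ltn_ord i; lia.
    exact: e1.
  apply/is_trig_mxP => i j lij; rewrite mxE permE hankel_entry /=.
  have -> : (d - i.+1 + j = d + (j - i.+1))%N.
    by have := ltn_ord i; lia.
  by rewrite exprD Nd mul0r mulmx0 mul0mx mxE.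
by rewrite row_permE unitmx_mul => /andP[].
Qed.

Lemma tsim_nil n (N : 'M[F]_n) d (v : 'rV[F]_n) (c : 'cV[F]_n) :
  (0 < d)%N -> N ^+ d = 0 -> (v *m N ^+ d.-1 *m c) 0 0 = 1 ->
  (forall m (B : 'M[F]_m), (m < n)%N -> Tsim B) -> Tsim N.
Proof.
move=> d0 Nd e1 IH.
set K := krylov d v N; set L := (krylov d c^T N^T)^T; set H := K *m L.
have Hu : H \in unitmx := hankel_unit Nd e1.
have rH : \rank H = d := mxrank_unit Hu.
have rK : \rank K = d.
  by apply/eqP; rewrite eqn_leq rank_leq_row -{1}rH mxrankM_maxl.
have rL : \rank L = d.
  by apply/eqP; rewrite eqn_leq rank_leq_col -{1}rH mxrankM_maxr.
have dn : (d <= n)%N by rewrite -rK rank_leq_col.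
have KN : K *m N = shiftmx d *m K by apply: krylovM.
have NL : N *m L = L *m (shiftmx d)^T.
  have NTd : N^T ^+ d = 0 by rewrite -trmxX Nd trmx0.
  by have := @krylovM F n d c^T N^T NTd => /(congr1 trmx); rewrite !trmx_mul trmxK.
set W := kermx L.
have WN : stablemx W N.
  by apply/sub_kermxP; rewrite -mulmxA NL mulmxA mulmx_ker mul0mx.
set U' := row_base W.
have U'N : stablemx U' N by rewrite stablemx_row_base.
apply: (@tsim_split _ n d (\rank W) N K U' (shiftmx d) (conjmx U' N)).
- by rewrite mxrank_ker rL subnKC.
- have /submxP [Y eY] : ((K :&: U') <= K)%MS := capmxSl _ _.
  have XW : ((K :&: U') <= W)%MS.
    by apply: submx_trans (capmxSr _ _) _; rewrite eq_row_base.
  move/sub_kermxP: XW; rewrite eY -mulmxA -/H => YH.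
  have Y0 : Y = 0 by rewrite -(mulmxK Hu Y) YH mul0mx.
  by rewrite Y0 mul0mx.
- by rewrite /row_free rK.
- exact: row_base_free.
- exact: KN.
- by rewrite /conjmx mulmxKpV.
- by exists H => //; rewrite /H mulmxA -KN -mulmxA NL mulmxA.
- by apply: IH; rewrite mxrank_ker rL; lia.
Qed.

End TS3.

Lemma tsim_all (F : closedFieldType) n (A : 'M[F]_n) : Tsim A.
Proof.
elim/ltn_ind: n A => n IH A.
case: n IH A => [|k] IH A.
  exists 1%:M; first exact: unitmx1.
  by rewrite mulmx1 mul1mx; apply/matrixP => -[].
have [l rl] : exists l, root (char_poly A) l.
  by apply/closed_rootP; rewrite size_char_poly.
have [mu [q nq ep]] := multiplicity_XsubC (char_poly A) l.
have cp0 : char_poly A != 0 by apply: monic_neq0; apply: char_poly_monic.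
rewrite cp0 /= in nq.
have mu0 : (0 < mu)%N.
  case: mu ep => // ep; move: rl; rewrite ep expr0 mulr1 => rl.
  by rewrite rl in nq.
set p1 := ('X - l%:P) ^+ mu.
have cop : coprimep q p1.
  by rewrite coprimep_sym; apply: coprimep_expl; rewrite coprimep_sym coprimep_XsubC.
have full : (kermxpoly A q + kermxpoly A p1 :=: 1%:M)%MS.
  apply: eqmx_trans (eqmx_sym (kermxpolyM A cop)) _.
  by apply: kermxpoly_min; rewrite -ep mxminpoly_dvd_char.
have cap0 := mxdirect_kermxpoly A cop.
have hp1 : kermxpoly A p1 = kermx ((A - l%:M) ^+ mu).
  by rewrite /kermxpoly rmorphXn /= rmorphB /= horner_mx_X horner_mx_C.
have [V2z|V2nz] := eqVneq (kermxpoly A q) 0.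
  apply: (@tsim_shift _ _ _ l).
  set B := A - l%:M.
  have Bmu : B ^+ mu = 0.
    have : (1%:M <= kermxpoly A p1)%MS.
      have : (1%:M <= kermxpoly A q + kermxpoly A p1)%MS by rewrite full submx_refl.
      by rewrite V2z adds0mx.
    by rewrite hp1 => /sub_kermxP; rewrite mul1mx.
  have exd : exists d, B ^+ d == 0 by exists mu; rewrite Bmu.
  case: (ex_minnP exd) => d /eqP Bd dmin.
  have d0 : (0 < d)%N.
    by case: d Bd dmin => // B1 _; move/eqP: B1; rewrite expr0 oner_eq0.
  have Bd1 : B ^+ d.-1 != 0.
    by apply/negP => /dmin; case: d d0 {Bd dmin} => // d' _ /=; rewrite ltnn.
  have [i [j nz]] := matrix0Pn _ Bd1.
  pose v : 'rV[F]_k.+1 := delta_mx 0 i.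
  pose c : 'cV[F]_k.+1 := ((B ^+ d.-1) i j)^-1 *: delta_mx j 0.
  apply: (@tsim_nil _ _ B d v c d0 Bd).
    rewrite /v /c -rowE -scalemxAr -colE !mxE mulVf //.
  by move=> m B' lt; apply: IH.
have V1nz : kermxpoly A p1 != 0.
  have : eigenvalue A l by rewrite eigenvalue_root_char.
  move=> /eigenvalueP [v vA vnz]; apply/negP => /eqP V10.
  have : (v <= kermxpoly A p1)%MS.
    rewrite hp1; apply/sub_kermxP.
    case: mu mu0 {p1 cop full cap0 hp1 V10 ep} => // mu' _.
    by rewrite exprS -mulmxE mulmxA mulmxBr vA mul_mx_scalar subrr mul0mx.
  by rewrite V10 submx0 (negPf vnz).
have rsum : (\rank (kermxpoly A q) + \rank (kermxpoly A p1) = k.+1)%N.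
  rewrite -mxrank_sum_cap cap0 mxrank0 addn0.
  by rewrite full mxrank1.
have st1 : stablemx (row_base (kermxpoly A q)) A.
  by rewrite stablemx_row_base; apply: comm_mx_stable_kermxpoly.
have st2 : stablemx (row_base (kermxpoly A p1)) A.
  by rewrite stablemx_row_base; apply: comm_mx_stable_kermxpoly.
apply: (@tsim_split _ _ _ _ A (row_base (kermxpoly A q)) (row_base (kermxpoly A p1))
   (conjmx (row_base (kermxpoly A q)) A) (conjmx (row_base (kermxpoly A p1)) A) rsum).
- apply/eqP; rewrite -submx0 (cap_eqmx (eq_row_base _) (eq_row_base _)) cap0.
  exact: submx_refl.
- exact: row_base_free.
- exact: row_base_free.
- by rewrite /conjmx mulmxKpV.
- by rewrite /conjmx mulmxKpV.
- have h2 : (0 < \rank (kermxpoly A p1))%N by rewrite lt0n mxrank_eq0.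
  by apply: IH; lia.
- have h1 : (0 < \rank (kermxpoly A q))%N by rewrite lt0n mxrank_eq0.
  by apply: IH; lia.
Qed.

Lemma herm_unit (C : numClosedFieldType) n (H1 H2 : 'M[C]_n) :
  H1 + 'i *: H2 \in unitmx -> exists a : nat, H1 + a%:R *: H2 \in unitmx.
Proof.
move=> Hu.
pose p := \det (map_mx polyC H1 + 'X *: map_mx polyC H2).
have horner_evaliC x : horner_eval (x : C) \o polyC =1 id := fun=> hornerC _ _.
have Qunit x : H1 + x *: H2 \in unitmx = (p.[x] != 0).
  rewrite /p -horner_evalE -det_map_mx map_mxD map_mxZ/= horner_evalE hornerX.
  by rewrite -![map_mx _ (map_mx polyC _)]map_mx_comp !map_mx_id// unitmxE unitfE.
have p_neq0 : p != 0.
  by move: Hu; rewrite Qunit; apply: contra_neq => ->; rewrite hornerE.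
have rs_uniq : uniq [seq (i%:R : C) | i <- iota 0 (size p)].
  by rewrite map_inj_uniq ?iota_uniq //; apply: mulrIn; rewrite oner_eq0.
have := contraNN (fun x => max_poly_roots p_neq0 x rs_uniq).
rewrite size_map size_iota ltnn => /(_ isT) /allPn[a a_in rootNpa].
by move: a_in => /mapP [i _ ea]; exists i; rewrite Qunit -ea.
Qed.

Lemma simQ (F : fieldType) n (Q A X : 'M[F]_n) :
  Q \in unitmx -> A *m Q = Q *m X -> invmx Q *m A *m Q = X.
Proof. by move=> Qu e; rewrite -mulmxA e mulmxA mulVmx // mul1mx. Qed.

Section S.
Variable R : realType.
Lemma ecM m n p (A : 'M[R[i]]_(m,n)) (B : 'M[R[i]]_(n,p)) : entry_conj (A *m B) = entry_conj A *m entry_conj B.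
Proof. exact: map_mxM. Qed.
Lemma ecZ m n a (A : 'M[R[i]]_(m,n)) : entry_conj (a *: A) = a^* *: entry_conj A.
Proof. exact: map_mxZ. Qed.
Lemma ecD m n (A B : 'M[R[i]]_(m,n)) : entry_conj (A + B) = entry_conj A + entry_conj B.
Proof. exact: map_mxD. Qed.
Lemma ecN m n (A : 'M[R[i]]_(m,n)) : entry_conj (- A) = - entry_conj A.
Proof. exact: map_mxN. Qed.
Lemma ecV n (A : 'M[R[i]]_n) : entry_conj (invmx A) = invmx (entry_conj A).
Proof. exact: map_invmx. Qed.
Lemma ecU n (A : 'M[R[i]]_n) : (entry_conj A \in unitmx) = (A \in unitmx).
Proof. exact: map_unitmx. Qed.
Lemma ecK m n (A : 'M[R[i]]_(m,n)) : entry_conj (entry_conj A) = A.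
Proof. by apply/matrixP => i j; rewrite !mxE conjCK. Qed.
Lemma adjM m n p (A : 'M[R[i]]_(m,n)) (B : 'M[R[i]]_(n,p)) : adjmx (A *m B) = adjmx B *m adjmx A.
Proof. by rewrite /adjmx ecM trmx_mul. Qed.
Lemma adjZ m n a (A : 'M[R[i]]_(m,n)) : adjmx (a *: A) = a^* *: adjmx A.
Proof. by rewrite /adjmx ecZ linearZ. Qed.
Lemma adjD m n (A B : 'M[R[i]]_(m,n)) : adjmx (A + B) = adjmx A + adjmx B.
Proof. by rewrite /adjmx ecD linearD. Qed.
Lemma adjN m n (A : 'M[R[i]]_(m,n)) : adjmx (- A) = - adjmx A.
Proof. by rewrite /adjmx ecN linearN. Qed.
Lemma adjK m n (A : 'M[R[i]]_(m,n)) : adjmx (adjmx A) = A.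
Proof. by rewrite /adjmx /entry_conj map_trmx trmxK -/(entry_conj _) -/(entry_conj _) ecK. Qed.
Lemma adjV n (A : 'M[R[i]]_n) : adjmx (invmx A) = invmx (adjmx A).
Proof. by rewrite /adjmx ecV trmx_inv. Qed.
End S.


Theorem theorem1 (R : realType) (n : nat) (A : 'M[R[i]]_n) :
  G_Hamiltonian A <->
  exists Q : 'M[R[i]]_n, Q \in unitmx /\ invmx Q *m A *m Q = - entry_conj A.
Proof.
split.
- case=> G [S] [Gu hG hS eA].
  set M := entry_conj A.
  have [P Pu eP] := tsim_all M.
  have MT : M^T = - 'i *: (S *m invmx G).
    have -> : M^T = adjmx A by [].
    by rewrite eA adjZ adjM adjV hG hS conjCi.
  have GA : G *m A = - M^T *m G.
    rewrite MT scaleNr opprK -scalemxAl -mulmxA mulVmx // mulmx1 eA.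
    by rewrite -scalemxAr mulmxA mulmxV // mul1mx.
  have AG : A *m invmx G = - (invmx G *m M^T).
    have <- : invmx G *m (G *m A) *m invmx G = A *m invmx G.
      by rewrite mulmxA mulVmx // mul1mx.
    by rewrite GA mulNmx mulmxN mulNmx -!mulmxA mulmxV // mulmx1.
  have MP : M^T *m invmx P = invmx P *m M.
    by rewrite -[M^T]mul1mx -(mulVmx Pu) -(mulmxA (invmx P)) -eP !mulmxA mulmxK.
  exists (invmx G *m invmx P); split.
    by rewrite unitmx_mul !unitmx_inv Gu Pu.
  apply: simQ; first by rewrite unitmx_mul !unitmx_inv Gu Pu.
  by rewrite mulmxA AG mulNmx -mulmxA MP mulmxN mulmxA.
- case=> Q [Qu eQ].
  set M := entry_conj A.
  have [P Pu eP] := tsim_all M.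
  have AQ : A *m Q = Q *m - M.
    by rewrite -eQ !mulmxA mulmxV // mul1mx.
  set X := Q *m P.
  have Xu : X \in unitmx by rewrite unitmx_mul Qu Pu.
  have AX : A *m X = - (X *m M^T).
    by rewrite /X mulmxA AQ mulmxN mulNmx -mulmxA eP mulmxA.
  set Y := invmx X.
  have YA : Y *m A = - M^T *m Y.
    rewrite -[Y *m A]mulmx1 -(mulmxV Xu) mulmxA -(mulmxA Y) AX mulmxN mulmxA.
    by rewrite mulVmx // mul1mx mulNmx.
  set Z := adjmx Y.
  have ZA : Z *m A = - M^T *m Z.
    have := congr1 adjmx YA; rewrite !adjM !adjN.
    have -> : adjmx M^T = A.
      by rewrite /adjmx /M /entry_conj map_trmx trmxK; apply/matrixP => i j; rewrite !mxE conjCK.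
    have -> : adjmx A = M^T by [].
    rewrite -/Z => e.
    by rewrite mulNmx e mulmxN opprK.
  have Yu : Y \in unitmx by rewrite unitmx_inv.
  have [a Ga] : exists a : nat, (Y + Z) + a%:R *: ('i *: (Z - Y)) \in unitmx.
    apply: herm_unit.
    have -> : Y + Z + 'i *: ('i *: (Z - Y)) = 2%:R *: Y.
      rewrite scalerA -expr2 sqrCi scaleN1r opprB addrACA subrr addr0.
      by rewrite -mulr2n scaler_nat.
    by rewrite unitmxZ // unitfE pnatr_eq0.
  set G := (Y + Z) + a%:R *: ('i *: (Z - Y)).
  have GA : G *m A = - M^T *m G.
    rewrite /G !mulmxDl -!scalemxAl mulmxBl YA ZA.
    by rewrite !mulmxDr -!scalemxAr mulmxBr.
  have hG : adjmx G = G.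
    rewrite /G !adjD !adjZ adjD adjN adjK -/Z conjCi conjC_nat.
    by rewrite [Z + Y]addrC scaleNr -scalerN opprB.
  exists G, (- 'i *: (G *m A)); split; [exact: Ga | exact: hG | |].
    change (adjmx (- 'i *: (G *m A)) = - 'i *: (G *m A)).
    rewrite adjZ adjM hG.
    have -> : adjmx A = M^T by [].
    have -> : M^T *m G = - (G *m A) by rewrite GA mulNmx opprK.
    by rewrite rmorphN /= conjCi opprK scalerN scaleNr.
  rewrite -scalemxAr scalerA mulmxA mulVmx // mul1mx mulrN -expr2 sqrCi opprK.
  by rewrite scale1r.
Qed.
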